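(* For a bigraph $X$, the poset $C(X^{K_2})$ is homotopy equivalent to the box complex $B_{/K_2}(X)$.
   Context: A graph is a set $V$ with a symmetric relation $E\subset V\times V$ (loops allowed). $K_2$ has vertices $0,1$ and edges $(0,1),(1,0)$, and is a bigraph via the identity coloring. A bigraph is a graph $X$ with a graph homomorphism $\varepsilon_X:X\to K_2$; $V_i(X)=\varepsilon_X^{-1}(i)$. $X^{K_2}$ is the graph whose vertices are maps $f:\{0,1\}\to V(X)$ with $f(0)\in V_0(X)$, $f(1)\in V_1(X)$, with $f,g$ adjacent iff $(f(0),g(1))\in E(X)$ and $(f(1),g(0))\in E(X)$. For a graph $G$, $C(G)$ is the poset of finite nonempty $\sigma\subset V(G)$ with $\sigma\times\sigma\subset E(G)$, ordered by inclusion. $B_{/K_2}(X)$ is the poset of pairs $(\sigma,\tau)$, $\sigma\subset V_0(X)$, $\tau\subset V_1(X)$ finite nonempty with $\sigma\times\tau\subset E(X)$, ordered componentwise by inclusion. Posets are regarded as spaces via geometric realizations of order complexes. *)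

(* Defs.v *)
From HB Require Import structures.
From mathcomp Require Import all_boot all_order all_algebra.
From mathcomp Require Import finmap.
From mathcomp Require Import all_classical.
From mathcomp Require Import reals topology.
From mathcomp Require Import Rstruct Rstruct_topology.
From Stdlib Require Import Rdefinitions.

Set Implicit Arguments.
Unset Strict Implicit.
Unset Printing Implicit Defensive.

Import Order.TTheory GRing.Theory Num.Theory.
Local Open Scope classical_set_scope.
Local Open Scope ring_scope.


Definition unit_interval : Type := set_type (`[0%R, 1%R] : set R).

Definition homotopic (X Y : topologicalType) (f g : X -> Y) : Prop :=
  exists H : (X * unit_interval)%type -> Y,
    continuous H /\
    (forall (x : X) (t : unit_interval), set_val t = 0%R -> H (x, t) = f x) /\
    (forall (x : X) (t : unit_interval), set_val t = 1%R -> H (x, t) = g x).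

Definition homotopy_equivalent (X Y : topologicalType) : Prop :=
  exists (f : X -> Y) (g : Y -> X),
    continuous f /\ continuous g /\
    homotopic (g \o f) id /\ homotopic (f \o g) id.

(* A point of the geometric realization of the order
   complex is a family of barycentric coordinates t : T -> R, nonnegative,
   with finite support contained in P and forming a chain, summing to 1. *)
Definition supp {T : Type} (t : T -> R) : set T := [set x | t x != 0%R].

Definition realization_point {T : choiceType} (P : set T)
    (le : T -> T -> Prop) (t : T -> R) : Prop :=
  [/\ forall x, (0 <= t x)%R,
      finite_set (supp t),
      supp t `<=` P,
      (forall x y, supp t x -> supp t y -> le x y \/ le y x) &
      (\sum_(x \in supp t) t x)%R = 1%R].

Definition realization {T : choiceType} (P : set T) (le : T -> T -> Prop)
  : Type := set_type (realization_point P le).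

(* Weak (coherent) topology: U is open iff for every finite set F of vertices
   the trace of U on the (finite, Euclidean) subcomplex spanned by F is open,
   i.e. is the trace of an open set of the product topology on T -> R. *)
Definition realization_open {T : choiceType} (P : set T)
    (le : T -> T -> Prop) (U : set (realization P le)) : Prop :=
  forall F : set T, finite_set F ->
    exists V : set {ptws T -> R}, open V /\
      forall p : realization P le, supp (set_val p) `<=` F ->
        (U p <-> V (set_val p)).

Section RealizationTopology.
Context {T : choiceType} (P : set T) (le : T -> T -> Prop).


Lemma realization_openT : @realization_open T P le setT.
Proof.
move=> F _; exists setT; split; first exact: openT.
by move=> p _.
Qed.

Lemma realization_openI : setI_closed (@realization_open T P le).
Proof.
move=> A B oA oB F fF.
have [VA [oVA hA]] := oA F fF; have [VB [oVB hB]] := oB F fF.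
exists (VA `&` VB); split; first exact: openI.
move=> p sp; split.
- by move=> [/(hA p sp) ? /(hB p sp) ?].
- by move=> [? ?]; split; [apply/(hA p sp)|apply/(hB p sp)].
Qed.

Lemma realization_open_bigU (I : Type) (f : I -> set (realization P le)) :
  (forall i, realization_open (f i)) -> realization_open (\bigcup_i f i).
Proof.
move=> of_ F fF.
pose V i := projT1 (cid (of_ i F fF)).
have hV i := projT2 (cid (of_ i F fF)).
exists (\bigcup_i V i); split.
  by apply: bigcup_open => i _; case: (hV i).
move=> p sp; split.
- by move=> [i _ /((proj2 (hV i)) p sp) ?]; exists i.
- by move=> [i _ ?]; exists i => //; apply/((proj2 (hV i)) p sp).
Qed.

HB.instance Definition _ :=
  Choice.copy (realization P le) (set_type (realization_point P le)).

HB.instance Definition _ := isOpenTopological.Build (realization P le)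
  realization_openT realization_openI realization_open_bigU.

End RealizationTopology.

(* A bigraph structure on the graph (V,E)
   (with V the whole type) is a homomorphism eps : V -> K_2, where the
   vertices 0,1 of K_2 are encoded by false,true; K_2 has edges exactly
   between distinct vertices, so eps is a homomorphism iff
   E x y -> eps x != eps y. *)
Definition graph_sym {T : Type} (E : T -> T -> Prop) : Prop :=
  forall x y, E x y -> E y x.

Definition bigraph_hom {V : Type} (E : V -> V -> Prop) (eps : V -> bool) : Prop :=
  forall x y, E x y -> eps x != eps y.

Definition clique_set {T : choiceType} (Vs : set T) (E : T -> T -> Prop)
  : set {fset T} :=
  [set s | (s != fset0)%fset /\ (forall x, x \in s -> Vs x) /\
           (forall x y, x \in s -> y \in s -> E x y)].

Definition fsubset_rel {T : choiceType} (s t : {fset T}) : Prop := (s `<=` t)%fset.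

(* X^{K_2}: vertices are maps f : {0,1} -> V(X) with f(0) in V_0, f(1) in V_1,
   encoded as the pair (f(0), f(1)); f ~ g iff (f0,g1) in E and (f1,g0) in E. *)
Definition expK2_vertices {V : Type} (eps : V -> bool) : set (V * V) :=
  [set p | eps p.1 = false /\ eps p.2 = true].

Definition expK2_edges {V : Type} (E : V -> V -> Prop) (f g : V * V) : Prop :=
  E f.1 g.2 /\ E f.2 g.1.

Definition box_set {V : choiceType} (E : V -> V -> Prop) (eps : V -> bool)
  : set ({fset V} * {fset V}) :=
  [set st | [/\ (st.1 != fset0)%fset, (st.2 != fset0)%fset,
               (forall x, x \in st.1 -> eps x = false),
               (forall y, y \in st.2 -> eps y = true) &
               (forall x y, x \in st.1 -> y \in st.2 -> E x y)]].

Definition box_le {V : choiceType} (a b : {fset V} * {fset V}) : Prop :=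
  (a.1 `<=` b.1)%fset /\ (a.2 `<=` b.2)%fset.

Section Sanity.
Context {T : choiceType} (P : set T) (le : T -> T -> Prop).
Lemma realization_openE (U : set (realization P le)) :
  open U = realization_open U.
Proof. by []. Qed.
End Sanity.

(* Main.v *)
Require Import Defs.
From HB Require Import structures.
From mathcomp Require Import all_boot all_order all_algebra finmap all_classical reals topology normedtype Rstruct Rstruct_topology.
Local Notation R := Rdefinitions.R.
From mathcomp Require Import ring lra.
Set Implicit Arguments. Unset Strict Implicit. Unset Printing Implicit Defensive.
Import Order.TTheory GRing.Theory Num.Theory.
Local Open Scope classical_set_scope.
Local Open Scope ring_scope.

Section Sums.
Variable T : choiceType.

Lemma sum_supp_eq (S1 S2 : seq T) (g : T -> R) : uniq S1 -> uniq S2 ->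
  (forall x, g x != 0 -> x \in S1) -> (forall x, g x != 0 -> x \in S2) ->
  \sum_(x <- S1) g x = \sum_(x <- S2) g x.
Proof.
move=> u1 u2 h1 h2.
have E S : \sum_(x <- S) g x = \sum_(x <- [seq x <- S | g x != 0]) g x.
  rewrite big_filter [RHS]big_mkcond /=; apply: eq_bigr => x _.
  by case: eqP => // ->.
rewrite E [RHS]E; apply: perm_big; apply: uniq_perm; rewrite ?filter_uniq //.
move=> x; rewrite !mem_filter; case: (boolP (g x != 0)) => //= gx; by rewrite (h1 _ gx) (h2 _ gx).
Qed.

Lemma sum_pred1 (G : seq T) (a : T) (h : T -> R) : uniq G -> a \in G ->
  \sum_(y <- G) (if a == y then h y else 0) = h a.
Proof.
move=> uG aG; rewrite (big_rem a) //= eqxx big1_seq ?addr0 //.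
move=> y /andP[_]; rewrite mem_rem_uniq // inE => /andP[/negPf yna _].
by rewrite eq_sym yna.
Qed.

Lemma fsum_seq (t : T -> R) : finite_set (supp t) ->
  (\sum_(x \in supp t) t x) = \sum_(x <- fset_set (supp t)) t x.
Proof. by move=> fin; rewrite fsbig_finite. Qed.

Definition sseq (t : T -> R) : seq T := fset_set (supp t).

Lemma sseq_uniq t : uniq (sseq t).
Proof. exact: fset_uniq. Qed.

Lemma mem_sseq t x : finite_set (supp t) -> (x \in sseq t) = (t x != 0).
Proof.
move=> fin; rewrite /sseq in_fset_set //; apply/idP/idP.
  by move/set_mem.
by move=> h; apply/mem_set.
Qed.

End Sums.

Section H.
Variables (T T' : choiceType) (le : T -> T -> Prop) (L U : T -> T').

Definition cum (S : seq T) (t : T -> R) (x : T) : R :=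
  \sum_(y <- S | `[< le y x >]) t y.
Definition mass (S : seq T) (t : T -> R) (lam : R) (x : T) : R :=
  Num.max 0 (Num.min (t x) (cum S t x - 1 + lam)).
Definition Hfun (S : seq T) (t : T -> R) (lam : R) (z : T') : R :=
  \sum_(x <- S | L x == z) (t x - mass S t lam x) +
  \sum_(x <- S | U x == z) mass S t lam x.

Lemma mass_ge0 (S : seq T) (t : T -> R) (lam : R) x : 0 <= mass S t lam x.
Proof. by rewrite /mass le_max lexx. Qed.

Lemma mass_le (S : seq T) (t : T -> R) (lam : R) x : 0 <= t x -> mass S t lam x <= t x.
Proof. by move=> h; rewrite /mass ge_max h ge_min lexx. Qed.

Lemma mass0 (S : seq T) (t : T -> R) (lam : R) x : t x = 0 -> mass S t lam x = 0.
Proof.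
move=> h; apply/eqP; rewrite eq_le mass_ge0 andbT /mass ge_max lexx /= ge_min h.
by rewrite lexx.
Qed.


Lemma cum_indep (S1 S2 : seq T) (t : T -> R) x : uniq S1 -> uniq S2 ->
  (forall y, t y != 0 -> y \in S1) -> (forall y, t y != 0 -> y \in S2) ->
  cum S1 t x = cum S2 t x.
Proof.
move=> u1 u2 h1 h2; rewrite /cum !(big_mkcond (fun y => `[< le y x >])).
apply: sum_supp_eq => // y; case: ifP => _; [exact: h1|by rewrite eqxx|exact: h2|by rewrite eqxx].
Qed.

Lemma mass_indep (S1 S2 : seq T) (t : T -> R) (lam : R) x : uniq S1 -> uniq S2 ->
  (forall y, t y != 0 -> y \in S1) -> (forall y, t y != 0 -> y \in S2) ->
  mass S1 t lam x = mass S2 t lam x.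
Proof. by move=> *; rewrite /mass (@cum_indep S1 S2). Qed.

Lemma Hfun_indep (S1 S2 : seq T) (t : T -> R) (lam : R) z : uniq S1 -> uniq S2 ->
  (forall y, t y != 0 -> y \in S1) -> (forall y, t y != 0 -> y \in S2) ->
  Hfun S1 t lam z = Hfun S2 t lam z.
Proof.
move=> u1 u2 h1 h2; rewrite /Hfun.
have hm x : mass S1 t lam x = mass S2 t lam x by apply: mass_indep.
have key (S : seq T) (F : T -> R) (Q : pred T) : (forall y, t y = 0 -> F y = 0) ->
   (forall y, t y != 0 -> y \in S) -> uniq S ->
   \sum_(x <- S | Q x) F x = \sum_(x <- S1 | Q x) F x.
  move=> F0 hS uS; rewrite !(big_mkcond Q); apply: sum_supp_eq => // y.
    case: ifP => _; last by rewrite eqxx.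
    by move=> Fy; apply: hS; apply/eqP => ty; move: Fy; rewrite F0 ?eqxx.
  case: ifP => _; last by rewrite eqxx.
  by move=> Fy; apply: h1; apply/eqP => ty; move: Fy; rewrite F0 ?eqxx.
congr (_ + _).
  under [in RHS]eq_bigr do rewrite -hm.
  rewrite (@key S2) //; move=> y y0; rewrite y0 mass0 // subrr //.
under [in RHS]eq_bigr do rewrite -hm.
rewrite (@key S2) //; move=> y y0; rewrite mass0 //.
Qed.

Lemma Hfun_same (S : seq T) (t : T -> R) (lam : R) z : L = U ->
  Hfun S t lam z = \sum_(x <- S | L x == z) t x.
Proof.
move=> LU; rewrite /Hfun -LU -big_split /=; apply: eq_bigr => x _.
exact: subrK.
Qed.


Lemma swap_pred1 (G : seq T') (Sx : seq T) (f : T -> T') (a : T -> R) :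
  uniq G -> (forall x, x \in Sx -> f x \in G) ->
  \sum_(z <- G) \sum_(x <- Sx | f x == z) a x = \sum_(x <- Sx) a x.
Proof.
move=> uG hG.
under eq_bigr => z _ do rewrite big_mkcond.
rewrite exchange_big /= big_seq [RHS]big_seq; apply: eq_bigr => x xS.
by rewrite (@sum_pred1 _ G (f x) (fun=> a x)) ?hG.
Qed.

Lemma Hfun_sum (G : seq T') (Sx : seq T) (t : T -> R) (lam : R) : uniq G ->
  (forall x, x \in Sx -> (L x \in G) && (U x \in G)) ->
  \sum_(z <- G) Hfun Sx t lam z = \sum_(x <- Sx) t x.
Proof.
move=> uG hG; rewrite /Hfun big_split /=.
rewrite swap_pred1 //; last by move=> x /hG /andP[].
rewrite swap_pred1 //; last by move=> x /hG /andP[].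
rewrite -big_split /=; apply: eq_bigr => x _; exact: subrK.
Qed.

End H.


Lemma ptws_open_tube (A : choiceType) (K : set R) (Om : set ({ptws A -> R} * R)) :
  compact K -> open Om -> open [set f : {ptws A -> R} | forall l, K l -> Om (f, l)].
Proof.
move=> cK oOm; rewrite openE => f0 hf0.
have := (proj1 (compact_near_coveringP K) cK) {ptws A -> R} (nbhs f0)
  (fun i l => Om (i, l)) _.
move=> /(_ _) H; apply: H => l Kl.
have : nbhs (f0, l) Om by move: oOm; rewrite openE => /(_ _ (hf0 _ Kl)).
case=> [[Q1 Q2] [/= h1 h2] hQ].
exists (Q2, Q1) => //= -[a b] [/= ? ?]; exact: (hQ (b, a)).
Qed.

Lemma in01 (s : unit_interval) : 0 <= set_val s <= 1.
Proof.
by have := set_valP s; rewrite /= in_itv.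
Qed.

Lemma realization_cont2 (A B : choiceType) (P : set A) (le : A -> A -> Prop)
  (P' : set B) (le' : B -> B -> Prop)
  (Phi : (realization P le * unit_interval)%type -> realization P' le') :
  (forall F : set A, finite_set F -> exists F' : set B,
     exists g : (({ptws A -> R} * R)%type -> {ptws B -> R}),
     [/\ finite_set F', continuous g &
      forall p s, supp (set_val p) `<=` F ->
        supp (set_val (Phi (p, s))) `<=` F' /\
        set_val (Phi (p, s)) = g (set_val p, set_val s)]) ->
  continuous Phi.
Proof.
move=> hyp; apply/continuousP => Aset oA.
have key : forall F, finite_set F -> exists g : (({ptws A -> R} * R)%type -> {ptws B -> R}),
   exists V' : set {ptws B -> R}, [/\ continuous g, open V' &
   forall p s, supp (set_val p) `<=` F ->
     (Aset (Phi (p, s)) <-> V' (g (set_val p, set_val s)))].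
  move=> F fF; have [F' [g [fF' cg hg]]] := hyp F fF.
  have [V' [oV' hV']] := oA F' fF'.
  exists g, V'; split => // p s sp; have [s1 e1] := hg p s sp.
  by rewrite -e1; apply: hV'.
rewrite openE => -[p0 s0] /= Ap0.
have fin0 : finite_set (supp (set_val p0)) by case: (set_valP p0).
have [g0 [V0 [cg0 oV0 h0]]] := key _ fin0.
have oOm0 : open (g0 @^-1` V0) by move/continuousP: cg0; apply.
have : nbhs ((set_val p0, set_val s0) : ({ptws A -> R} * R)%type) (g0 @^-1` V0).
  by move: oOm0; rewrite openE; apply; apply/h0.
case=> [[Q1 Q2] [/= hQ1 hQ2] hQ].
have [e e0 be] := (proj1 (nbhs_ballP _ _)) hQ2.
set d := e / 2.
have d0 : 0 < d by rewrite /d divr_gt0.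
pose K := [set x : R | Num.max 0 (set_val s0 - d) <= x <= Num.min 1 (set_val s0 + d)].
have cK : compact K.
  rewrite (_ : K = `[Num.max 0 (set_val s0 - d), Num.min 1 (set_val s0 + d)]%classic).
    exact: segment_compact.
  by apply/seteqP; split => x; rewrite /K /= in_itv.
have K01 : forall l, K l -> 0 <= l <= 1.
  move=> l /andP[h1 h2]; apply/andP; split.
    by apply: (le_trans _ h1); rewrite le_max lexx.
  by apply: (le_trans h2); rewrite ge_min lexx.
pose W := [set p | forall s : unit_interval, K (set_val s) -> Aset (Phi (p, s))].
have oW : open W.
  rewrite realization_openE => F fF.
  have [g [V' [cg oV' hg]]] := key F fF.
  have oOm : open (g @^-1` V') by move/continuousP: cg; apply.
  exists [set f : {ptws A -> R} | forall l, K l -> (g @^-1` V') (f, l)].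
  split; first exact: ptws_open_tube.
  move=> p sp; split.
    move=> Wp l Kl.
    have l01 : `[0, 1]%classic l by rewrite /= in_itv; exact: K01.
    have := Wp (SigSub (mem_set l01)) Kl.
    by move/(hg _ _ sp).
  by move=> Vp s Ks; apply/(hg _ _ sp); apply: Vp.
have Wp0 : W p0.
  move=> s Ks; apply/(h0 _ _ (@subset_refl _ _)); apply: (hQ (_, _)); split.
    exact: nbhs_singleton.
  apply: be; rewrite /= /ball /=.
  move: Ks => /andP[k1 k2].
  have k1' : set_val s0 - d <= set_val s by apply: (le_trans _ k1); rewrite le_max lexx orbT.
  have k2' : set_val s <= set_val s0 + d by apply: (le_trans k2); rewrite ge_min lexx orbT.
  have e0' : 0 < e := e0.
  rewrite ltr_norml; apply/andP; split; rewrite /d in k1' k2' *; lra.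
rewrite /interior.
change (filter_prod (nbhs p0) (nbhs s0) (Phi @^-1` Aset)).
exists (W, [set s : unit_interval | ball (set_val s0) d (set_val s)]).
  split.
    - by apply: open_nbhs_nbhs; split.
  - exact: (@initial_continuous _ _ set_val s0 _ (nbhsx_ballx _ _ d0)).
move=> [p s] [/= Wp bs]; apply: Wp.
have [s1 s2] := andP (in01 s).
move: bs; rewrite /= /ball /= ltr_norml => /andP[b1 b2].
apply/andP; split.
  by rewrite ge_max s1 /=; lra.
by rewrite le_min s2 /=; lra.
Qed.


Section Cts.
Context {Y : topologicalType}.

Lemma cts_fst (Z : topologicalType) : continuous (@fst Y Z).
Proof.
move=> [a b] Q /= hQ; exists (Q, setT) => /=; first by split => //; exact: filterT.
by move=> [? ?] [].
Qed.

Lemma cts_snd (Z : topologicalType) : continuous (@snd Z Y).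
Proof.
move=> [a b] Q /= hQ; exists (setT, Q) => /=; first by split => //; exact: filterT.
by move=> [? ?] [].
Qed.

Lemma cts_ev (A : choiceType) (x : A) : continuous (fun f : {ptws A -> R} => f x).
Proof. exact: (@proj_continuous A (fun _ => R) x). Qed.

Lemma cts_D (f g : Y -> R) : continuous f -> continuous g ->
  continuous (fun y => f y + g y).
Proof. by move=> cf cg y; exact: (@continuousD R R^o Y f g y (cf y) (cg y)). Qed.

Lemma cts_N (f : Y -> R) : continuous f -> continuous (fun y => - f y).
Proof. by move=> cf y; exact: (@continuousN R R^o Y f y (cf y)). Qed.

Lemma cts_cst (c : R) : continuous (fun _ : Y => c).
Proof. by move=> y; apply: cvg_cst. Qed.

Lemma cts_max (f g : Y -> R) : continuous f -> continuous g ->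
  continuous (fun y => Num.max (f y) (g y)).
Proof. by move=> cf cg y; apply: (@continuous_max _ _ f g y); [exact: cf|exact: cg]. Qed.

Lemma cts_min (f g : Y -> R) : continuous f -> continuous g ->
  continuous (fun y => Num.min (f y) (g y)).
Proof. by move=> cf cg y; apply: (@continuous_min _ _ f g y); [exact: cf|exact: cg]. Qed.

Lemma cts_sum (I : Type) (S : seq I) (Q : pred I) (F : I -> Y -> R) :
  (forall i, continuous (F i)) -> continuous (fun y => \sum_(i <- S | Q i) F i y).
Proof.
move=> cF; elim: S => [|i S IH].
  by under eq_fun do rewrite big_nil; exact: cts_cst.
under eq_fun do rewrite big_cons; case: (Q i) => //.
exact: cts_D.
Qed.

End Cts.

Lemma cts_ptws (Y : topologicalType) (B : choiceType) (g : Y -> {ptws B -> R}) :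
  (forall z, continuous (fun y => g y z)) -> continuous g.
Proof.
move=> h y.
apply/(@cvg_sup (B -> R) B (fun i => Topological.class (initial_topology (fun f : B -> R => f i)))).
move=> i A /=.
rewrite (@nbhsE (initial_topology (fun f : B -> R => f i))) => -[C [[D oD <-] Cy] CA].
have := h i y D (open_nbhs_nbhs (conj oD Cy)).
move=> hD; have hD' : nbhs y [set x | D (g x i)] := hD.
have : nbhs y (g @^-1` A) by apply: filterS hD' => x Dx; apply: CA.
exact.
Qed.

Record chyps (T T' : choiceType) (P : set T) (le : T -> T -> Prop)
  (P' : set T') (le' : T' -> T' -> Prop) (L U : T -> T') : Prop := CHyps {
  ch_refl : forall x, le x x;
  ch_trans : forall x y z, le x y -> le y z -> le x z;
  ch_anti : forall x y, le x y -> le y x -> x = y;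
  ch_trans' : forall x y z, le' x y -> le' y z -> le' x z;
  ch_Lmono : forall x y, P x -> P y -> le x y -> le' (L x) (L y);
  ch_Umono : forall x y, P x -> P y -> le x y -> le' (U x) (U y);
  ch_LU : forall x, P x -> le' (L x) (U x);
  ch_PL : forall x, P x -> P' (L x);
  ch_PU : forall x, P x -> P' (U x) }.

Section Chain.
Variables (T T' : choiceType) (P : set T) (le : T -> T -> Prop)
  (P' : set T') (le' : T' -> T' -> Prop) (L U : T -> T').
Variable hyps : chyps P le P' le' L U.
Let le_refl := ch_refl hyps.
Let le_trans := ch_trans hyps.
Let le_anti := ch_anti hyps.
Let le'_trans := ch_trans' hyps.
Let Lmono := ch_Lmono hyps.
Let Umono := ch_Umono hyps.
Let LU := ch_LU hyps.
Let PL := ch_PL hyps.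
Let PU := ch_PU hyps.

Lemma Hfun_nz (S : seq T) (t : T -> R) (lam : R) z : Hfun le L U S t lam z != 0 -> exists x,
  [/\ x \in S, t x != 0 & ((L x = z /\ t x - mass le S t lam x != 0) \/
                           (U x = z /\ mass le S t lam x != 0))].
Proof.
move=> nz; have [e|H] := pselect (exists x,
  [/\ x \in S, t x != 0 & ((L x = z /\ t x - mass le S t lam x != 0) \/
                           (U x = z /\ mass le S t lam x != 0))]); first exact: e.
move: nz; rewrite /Hfun big1_seq; first rewrite big1_seq.
    by move=> h; exfalso; move: h; apply/negP; rewrite negbK; apply/eqP; exact: addr0.
  move=> x /andP[/eqP Ux xS]; apply/eqP; apply: contra_notT H => nz; exists x; split => //.
    by apply: contra nz => /eqP t0; rewrite mass0.
  by right.
move=> x /andP[/eqP Lx xS]; apply/eqP; apply: contra_notT H => nz; exists x; split => //.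
  by apply: contra nz => /eqP t0; rewrite mass0 // t0 subrr.
by left.
Qed.

Lemma LU_case (S : seq T) (t : T -> R) (lam : R) x1 x2 : uniq S -> (forall y, t y != 0 -> y \in S) ->
  (forall x, 0 <= t x) -> (forall x, t x != 0 -> P x) ->
  (forall x y, t x != 0 -> t y != 0 -> le x y \/ le y x) ->
  t x1 != 0 -> t x2 != 0 -> t x1 - mass le S t lam x1 != 0 ->
  mass le S t lam x2 != 0 -> le' (L x1) (U x2).
Proof.
move=> uS hS t0 tP tch n1 n2 m1 m2.
have [l12|l21] := tch _ _ n1 n2.
  by apply: (le'_trans (Lmono (tP _ n1) (tP _ n2) l12)); apply: LU; apply: tP.
have [/eqP e|ne] := boolP (x1 == x2); first by rewrite e; apply: LU; apply: tP.
exfalso.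
have m1lt : mass le S t lam x1 < t x1.
  by rewrite lt_neqAle mass_le // andbT; apply: contra m1 => /eqP ->; rewrite subrr.
have m2gt : 0 < mass le S t lam x2.
  by rewrite lt_neqAle mass_ge0 andbT eq_sym.
move: m1lt; rewrite /mass gt_max gt_min ltxx /= => /andP[_ a1].
move: m2gt; rewrite /mass lt_max ltxx /= lt_min => /andP[_ a2].
have x1S : x1 \in S by apply: hS.
have c1 : cum le S t x1 = t x1 + \sum_(y <- rem x1 S | `[< le y x1 >]) t y.
  by rewrite /cum (big_rem x1) //= asboolT.
have c2 : cum le S t x2 = \sum_(y <- rem x1 S | `[< le y x2 >]) t y.
  rewrite /cum (big_rem x1) //= asboolF ?add0r //.
  by move=> l12; move: ne; rewrite (le_anti l12 l21) eqxx.
have c12 : cum le S t x2 <= cum le S t x1 - t x1.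
  rewrite c1 c2 addrC addKr !(big_mkcond (fun y => `[< le y _ >])) /=.
  apply: ler_sum => y _; case: (pselect (le y x2)) => h.
    by rewrite asboolT // asboolT //; apply: le_trans h l21.
  by rewrite asboolF //; case: ifP.
move: a1 a2 c12; set c1' := cum _ _ _ x1; set c2' := cum _ _ _ x2.
move=> a1 a2 c12; lra.
Qed.


Lemma Hfun_point (t : T -> R) (lam : R) : realization_point P le t ->
  realization_point P' le' (Hfun le L U (sseq t) t lam).
Proof.
case=> t0R fin tP tch tsum.
have t0 : forall x, 0 <= t x by move=> x; apply/RleP.
have uS := sseq_uniq t.
have hS : forall y, t y != 0 -> y \in sseq t by move=> y; rewrite mem_sseq.
have tP' : forall x, t x != 0 -> P x by move=> x h; apply: tP.
have tch' : forall x y, t x != 0 -> t y != 0 -> le x y \/ le y x.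
  by move=> x y hx hy; apply: tch.
set G := undup (map L (sseq t) ++ map U (sseq t)).
have uG : uniq G by apply: undup_uniq.
have hG : forall z, Hfun le L U (sseq t) t lam z != 0 -> z \in G.
  move=> z /Hfun_nz [x [xS _ [[<- _]|[<- _]]]];
  by rewrite mem_undup mem_cat map_f ?orbT.
have finq : finite_set (supp (Hfun le L U (sseq t) t lam)).
  apply: (@sub_finite_set _ _ [set` G]); last exact: finite_seq.
  by move=> z /= /hG.
split => //.
- move=> z; apply/RleP; rewrite /Hfun; apply: addr_ge0; apply: sumr_ge0 => x _.
    by rewrite subr_ge0 mass_le.

  exact: mass_ge0.
- move=> z /Hfun_nz [x [_ tx [[<- _]|[<- _]]]]; [exact: PL (tP' _ tx)|exact: PU (tP' _ tx)].
- move=> z1 z2 /Hfun_nz [x1 [_ t1 h1]] /Hfun_nz [x2 [_ t2 h2]].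
  have LUc := @LU_case (sseq t) t lam _ _ uS hS t0 tP' tch'.
  case: h1 => [[<- m1]|[<- m1]]; case: h2 => [[<- m2]|[<- m2]].
  + by case: (tch' _ _ t1 t2) => l; [left|right]; apply: Lmono => //; apply: tP'.
  + by left; apply: LUc.
  + by right; apply: LUc.
  + by case: (tch' _ _ t1 t2) => l; [left|right]; apply: Umono => //; apply: tP'.
- rewrite fsum_seq // -tsum fsum_seq //.
  rewrite (@sum_supp_eq _ _ G) //; last first.
  + by move=> z nz; rewrite in_fset_set //; apply: mem_set.
  apply: Hfun_sum => // x xS; by rewrite !mem_undup !mem_cat !(map_f _ xS) ?orbT.
Qed.

Definition lamf (rev : bool) (l : R) : R := if rev then 1 - l else l.

Lemma cts_comp (X Y Z : topologicalType) (f : X -> Y) (g : Y -> Z) :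
  continuous f -> continuous g -> continuous (fun x => g (f x)).
Proof. by move=> cf cg x; apply: continuous_comp; [exact: cf|exact: cg]. Qed.

Lemma cts_Hcoord (S : seq T) rev z :
  continuous (fun y : ({ptws T -> R} * R)%type => Hfun le L U S y.1 (lamf rev y.2) z).
Proof.
have ctx x : continuous (fun y : ({ptws T -> R} * R)%type => y.1 x).
  exact: (cts_comp (@cts_fst {ptws T -> R} R) (@cts_ev _ x)).
have ccum x : continuous (fun y : ({ptws T -> R} * R)%type => cum le S y.1 x).
  by apply: cts_sum => w; exact: ctx.
have clam : continuous (fun y : ({ptws T -> R} * R)%type => lamf rev y.2).
  apply: (cts_comp (@cts_snd R {ptws T -> R})); case: rev => /=; last by move=> ?; exact: cvg_id.
  by apply: cts_D; [exact: cts_cst|apply: cts_N => ?; exact: cvg_id].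
have cm x : continuous (fun y : ({ptws T -> R} * R)%type => mass le S y.1 (lamf rev y.2) x).
  rewrite /mass; apply: cts_max; first exact: cts_cst.
  apply: cts_min; first exact: ctx.
  by apply: cts_D => //; apply: cts_D => //; exact: cts_cst.
rewrite /Hfun; apply: cts_D; apply: cts_sum => x //; apply: cts_D => //; exact: cts_N.
Qed.

Definition Hreal rev (ps : (realization P le * unit_interval)%type) : realization P' le' :=
  SigSub (mem_set (@Hfun_point (set_val ps.1) (lamf rev (set_val ps.2)) (set_valP ps.1))).

Lemma Hreal_val rev p s : set_val (Hreal rev (p, s)) =
  Hfun le L U (sseq (set_val p)) (set_val p) (lamf rev (set_val s)).
Proof. by []. Qed.

Lemma Hreal_cont rev : continuous (Hreal rev).
Proof.
apply: realization_cont2 => F fF.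
exists (L @` F `|` U @` F).
exists (fun y : ({ptws T -> R} * R)%type =>
  ((fun z => Hfun le L U (fset_set F) y.1 (lamf rev y.2) z) : {ptws T' -> R})).
split.
- by rewrite finite_setU; split; apply: finite_image.
- by apply: cts_ptws => z; exact: cts_Hcoord.
move=> p s sp.
have [t0 fin _ _ _] := set_valP p.
have hS : forall y, set_val p y != 0 -> y \in sseq (set_val p).
  by move=> y; rewrite mem_sseq.
have hF : forall y, set_val p y != 0 -> y \in (fset_set F : seq T).
  by move=> y ny; rewrite in_fset_set //; apply: mem_set; apply: sp.
split.
  move=> z /= /Hfun_nz [x [_ tx [[<- _]|[<- _]]]]; [left|right]; exists x => //; exact: sp.
apply: funext => z /=; apply: Hfun_indep => //; try exact: sseq_uniq; try exact: fset_uniq.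
Qed.

Lemma rp_sum1 t : realization_point P le t -> \sum_(x <- sseq t) t x = 1.
Proof. by case=> _ fin _ _ tsum; rewrite /sseq -fsum_seq. Qed.

Lemma rp_ge0 t x : realization_point P le t -> 0 <= t x.
Proof. by case=> t0 _ _ _ _; apply/RleP. Qed.

Lemma cum_le1 t x : realization_point P le t -> cum le (sseq t) t x <= 1.
Proof.
move=> rp; rewrite -(rp_sum1 rp) /cum [X in X <= _]big_mkcond /=.
by apply: ler_sum => y _; case: ifP => // _; exact: rp_ge0 rp.
Qed.

Lemma cum_ge t x : realization_point P le t -> t x <= cum le (sseq t) t x.
Proof.
move=> rp; have [fin _] : finite_set (supp t) /\ True by case: rp.
have c0 : 0 <= cum le (sseq t) t x by apply: sumr_ge0 => y _; exact: rp_ge0 rp.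
case: (boolP (x \in sseq t)) => xS.
  rewrite /cum (big_rem x) //= asboolT // lerDl.
  by apply: sumr_ge0 => y _; exact: rp_ge0 rp.
by move: xS; rewrite mem_sseq // negbK => /eqP ->.
Qed.

Lemma mass_at0 t x : realization_point P le t -> mass le (sseq t) t 0 x = 0.
Proof.
move=> rp; rewrite /mass addr0; apply: max_l.
by rewrite ge_min subr_le0 (cum_le1 _ rp) orbT.
Qed.

Lemma mass_at1 t x : realization_point P le t -> mass le (sseq t) t 1 x = t x.
Proof.
move=> rp; rewrite /mass subrK min_l ?(cum_ge _ rp) // max_r //; exact: rp_ge0 rp.
Qed.

Lemma Hfun_at0 t z : realization_point P le t ->
  Hfun le L U (sseq t) t 0 z = \sum_(x <- sseq t | L x == z) t x.
Proof.
move=> rp; rewrite /Hfun [X in _ + X]big1 ?addr0; last by move=> x _; exact: mass_at0.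
by apply: eq_bigr => x _; rewrite mass_at0 // subr0.
Qed.

Lemma Hfun_at1 t z : realization_point P le t ->
  Hfun le L U (sseq t) t 1 z = \sum_(x <- sseq t | U x == z) t x.
Proof.
move=> rp; rewrite /Hfun [X in X + _]big1 ?add0r; last by move=> x _; rewrite mass_at1 // subrr.
by apply: eq_bigr => x _; rewrite mass_at1.
Qed.
End Chain.

Lemma cts_pair_cst (X Y : topologicalType) (c : Y) : continuous (fun x : X => (x, c)).
Proof.
move=> p Q [[Q1 Q2] [/= h1 h2] hQ]; apply: filterS h1 => x Q1x.
by apply: hQ; split => //=; exact: nbhs_singleton h2.
Qed.

Lemma sum_eq_self (A : choiceType) (S : seq A) (t : A -> R) z : uniq S ->
  (forall y, t y != 0 -> y \in S) -> \sum_(x <- S | x == z) t x = t z.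
Proof.
move=> uS hS; rewrite big_mkcond /=; case zS: (z \in S).
  rewrite -(@sum_pred1 _ S z t) //; apply: eq_bigr => x _; by rewrite eq_sym.
rewrite big1_seq; last by move=> x /andP[_ xS]; case: eqP => // exz; move: zS; rewrite -exz xS.
have : t z == 0 by apply: contraFT zS => /hS.
by move/eqP ->.
Qed.

Lemma push_comp (A B C : choiceType) (f : A -> B) (g : B -> C) (t : A -> R) w :
  finite_set (supp t) ->
  \sum_(y <- sseq (fun z => \sum_(x <- sseq t | f x == z) t x) | g y == w)
     (\sum_(x <- sseq t | f x == y) t x) =
  \sum_(x <- sseq t | g (f x) == w) t x.
Proof.
move=> fin; set pu := fun z => \sum_(x <- sseq t | f x == z) t x.
set G := undup (map f (sseq t)).
have uG : uniq G by apply: undup_uniq.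
have hG : forall y, pu y != 0 -> y \in G.
  move=> y; apply: contraR => yG; apply/eqP; rewrite /pu big1_seq //.
  move=> x /andP[/eqP fx xS]; move: yG; by rewrite -fx mem_undup map_f.
have finp : finite_set (supp pu).
  by apply: (@sub_finite_set _ _ [set` G]); [move=> y /= /hG|exact: finite_seq].
rewrite big_mkcond /= (@sum_supp_eq _ _ G); first last.
- by move=> y; case: ifP => [_ ny|]; [apply: hG|rewrite eqxx].
- by move=> y; case: ifP => [_ ny|]; [rewrite mem_sseq|rewrite eqxx].
- exact: uG.
- exact: sseq_uniq.
rewrite (@eq_bigr _ _ _ _ _ _ _ (fun y => \sum_(x <- sseq t | f x == y)
   (if g (f x) == w then t x else 0))); last first.
  move=> y _; rewrite /pu; case: eqP => e.
    by apply: eq_bigr => x /eqP ->; rewrite e eqxx.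
  by apply/esym/big1 => x /eqP ->; case: eqP.
rewrite swap_pred1 //; first by rewrite [RHS]big_mkcond.
by move=> x xS; rewrite mem_undup map_f.
Qed.

Lemma real_eq (A : choiceType) (P : set A) (le : A -> A -> Prop) (p q : realization P le) :
  set_val p = set_val q -> p = q.
Proof. by rewrite !set_valE => h; apply: val_inj. Qed.

Local Open Scope fset_scope.

Section Concrete.
Variables (V : choiceType) (E : V -> V -> Prop) (eps : V -> bool).
Hypotheses (Esym : graph_sym E) (Ehom : bigraph_hom E eps).

Definition fmapC (s : {fset (V * V)}) : {fset V} * {fset V} :=
  ([fset x.1 | x in s], [fset x.2 | x in s]).
Definition gmapC (st : {fset V} * {fset V}) : {fset (V * V)} := st.1 `*` st.2.

Local Notation P1 := (clique_set (expK2_vertices eps) (expK2_edges E)).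
Local Notation le1 := (@fsubset_rel (V * V)%type).
Local Notation P2 := (box_set E eps).
Local Notation le2 := (@box_le V).

Lemma le1_refl x : le1 x x. Proof. exact: fsubset_refl. Qed.
Lemma le1_trans x y z : le1 x y -> le1 y z -> le1 x z.
Proof. exact: fsubset_trans. Qed.
Lemma le1_anti x y : le1 x y -> le1 y x -> x = y.
Proof. by move=> h1 h2; apply/eqP; rewrite eqEfsubset h1 h2. Qed.
Lemma le2_refl x : le2 x x. Proof. by split; exact: fsubset_refl. Qed.
Lemma le2_trans x y z : le2 x y -> le2 y z -> le2 x z.
Proof. by move=> [h1 h2] [h3 h4]; split; [exact: fsubset_trans h3|exact: fsubset_trans h4]. Qed.
Lemma le2_anti x y : le2 x y -> le2 y x -> x = y.
Proof.
case: x y => [a b] [c d] [/= h1 h2] [/= h3 h4].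
by congr pair; apply/eqP; rewrite eqEfsubset ?h1 ?h2 ?h3 ?h4.
Qed.

Lemma F1 s : P1 s -> P2 (fmapC s).
Proof.
case=> ne [hv he]; have [a0 a0S] := fset0Pn _ ne; split => /=.
- by apply/fset0Pn; exists a0.1; apply: in_imfset.
- by apply/fset0Pn; exists a0.2; apply: in_imfset.
- by move=> x /imfsetP[a aS ->]; case: (hv a aS).
- by move=> x /imfsetP[a aS ->]; case: (hv a aS).
- by move=> x y /imfsetP[a aS ->] /imfsetP[b bS ->]; case: (he a b aS bS).
Qed.

Lemma F2 s t : le1 s t -> le2 (fmapC s) (fmapC t).
Proof.
move=> h; split; apply/fsubsetP => x /imfsetP[a aS ->]; apply: in_imfset;
exact: (fsubsetP h).
Qed.

Lemma G1 st : P2 st -> P1 (gmapC st).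
Proof.
case: st => [a b] [/= na nb ha hb hab].
have [x0 x0a] := fset0Pn _ na; have [y0 y0b] := fset0Pn _ nb.
split.
  by apply/fset0Pn; exists (x0, y0); rewrite in_fsetM x0a y0b.
split.
  by move=> [x y]; rewrite in_fsetM /= => /andP[hx hy]; split; [exact: ha|exact: hb].
move=> [x1 x2] [y1 y2]; rewrite !in_fsetM /= => /andP[h1 h2] /andP[h3 h4].
by split => /=; [exact: hab|apply: Esym; exact: hab].
Qed.

Lemma G2 st st' : le2 st st' -> le1 (gmapC st) (gmapC st').
Proof.
move=> [l1 l2]; apply/fsubsetP => x; rewrite !in_fsetM => /andP[h1 h2].
by apply/andP; split; [exact: (fsubsetP l1)|exact: (fsubsetP l2)].
Qed.

Lemma GF s : le1 s (gmapC (fmapC s)).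
Proof.
apply/fsubsetP => x xs; rewrite in_fsetM /=; apply/andP; split.
  exact: (in_imfset _ (fun y : V * V => y.1) xs).
exact: (in_imfset _ (fun y : V * V => y.2) xs).
Qed.

Lemma FG st : P2 st -> fmapC (gmapC st) = st.
Proof.
case: st => [a b] [/= na nb _ _ _].
have [x0 x0a] := fset0Pn _ na; have [y0 y0b] := fset0Pn _ nb.
rewrite /fmapC /gmapC /=; congr pair; apply/eqP; rewrite eqEfsubset; apply/andP; split;
  apply/fsubsetP.
- by move=> x /imfsetP[[u v] /=]; rewrite in_fsetM => /andP[? ?] ->.
- by move=> x xa; apply/imfsetP; exists (x, y0); rewrite ?in_fsetM ?xa ?y0b.
- by move=> x /imfsetP[[u v] /=]; rewrite in_fsetM => /andP[? ?] ->.
- by move=> y yb; apply/imfsetP; exists (x0, y); rewrite ?in_fsetM ?x0a ?yb.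
Qed.


Lemma hypsF : chyps P1 le1 P2 le2 fmapC fmapC.
Proof.
split.
- exact: le1_refl.
- exact: le1_trans.
- exact: le1_anti.
- exact: le2_trans.
- by move=> x y _ _; exact: F2.
- by move=> x y _ _; exact: F2.
- by move=> x _; exact: le2_refl.
- exact: F1.
- exact: F1.
Qed.

Lemma hypsG : chyps P2 le2 P1 le1 gmapC gmapC.
Proof.
split.
- exact: le2_refl.
- exact: le2_trans.
- exact: le2_anti.
- exact: le1_trans.
- by move=> x y _ _; exact: G2.
- by move=> x y _ _; exact: G2.
- by move=> x _; exact: le1_refl.
- exact: G1.
- exact: G1.
Qed.

Lemma hypsH : chyps P1 le1 P1 le1 id (fun s => gmapC (fmapC s)).
Proof.
split.
- exact: le1_refl.
- exact: le1_trans.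
- exact: le1_anti.
- exact: le1_trans.
- by [].
- by move=> x y _ _ h; apply: G2; apply: F2.
- by move=> x _; exact: GF.
- by [].
- by move=> x h; apply: G1; apply: F1.
Qed.

Lemma zero01 : `[0, 1]%classic (0 : R).
Proof. by rewrite /= in_itv /= lexx ler01. Qed.

Definition u0 : unit_interval := SigSub (mem_set zero01).

Definition Fr (p : realization P1 le1) : realization P2 le2 := Hreal hypsF false (p, u0).
Definition Gr (q : realization P2 le2) : realization P1 le1 := Hreal hypsG false (q, u0).

Lemma FrE p : set_val (Fr p) =
  (fun z => \sum_(x <- sseq (set_val p) | fmapC x == z) set_val p x).
Proof. by rewrite /Fr Hreal_val; apply: funext => z; rewrite Hfun_same. Qed.

Lemma GrE q : set_val (Gr q) =
  (fun z => \sum_(x <- sseq (set_val q) | gmapC x == z) set_val q x).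
Proof. by rewrite /Gr Hreal_val; apply: funext => z; rewrite Hfun_same. Qed.

Lemma main_equiv : homotopy_equivalent (realization P1 le1) (realization P2 le2).
Proof.
exists Fr, Gr; split.
  exact: (cts_comp (@cts_pair_cst _ _ u0) (Hreal_cont (hyps:=hypsF) (rev:=false))).
split.
  exact: (cts_comp (@cts_pair_cst _ _ u0) (Hreal_cont (hyps:=hypsG) (rev:=false))).
split.
  exists (Hreal hypsH true); split; first exact: Hreal_cont.
  split.
    move=> p s s0; apply: real_eq; rewrite Hreal_val /lamf s0 subr0.
    apply: funext => z; rewrite (Hfun_at1 hypsH) //=.
    have -> : set_val (Gr (Fr p)) z =
      \sum_(y <- sseq (set_val (Fr p)) | gmapC y == z) set_val (Fr p) y.
      by have := GrE (Fr p); move/(congr1 (fun f => f z)).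
    rewrite FrE push_comp //.
    - have [_ fin _ _ _] := set_valP p. exact: fin.
    - exact: (set_valP p).
  move=> p s s1; apply: real_eq; rewrite Hreal_val /lamf s1 subrr.
  apply: funext => z; rewrite (@Hfun_at0 _ _ P1 le1 _ _ _ _ (set_valP p)) /= sum_eq_self //; first exact: sseq_uniq.
  - by move=> y; rewrite mem_sseq //; case: (set_valP p) => _ ? _ _ _.
exists (fun ps => ps.1); split; first exact: cts_fst.
split; last by [].
move=> q s _ /=; apply: real_eq; apply: funext => z.
have [_ fin sP _ _] := set_valP q.
rewrite FrE GrE push_comp //.
rewrite big_seq_cond (@eq_bigl _ _ _ _ _ _ (fun x => (x \in sseq (set_val q)) && (x == z))).
  rewrite -big_seq_cond sum_eq_self //; first exact: sseq_uniq.
  by move=> y; rewrite mem_sseq.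
move=> x /=; case xS: (x \in sseq (set_val q)) => //=.
rewrite FG //; apply: sP; move: xS; rewrite mem_sseq //.
Qed.

End Concrete.

Local Close Scope fset_scope.

Theorem corollary3p4 (V : choiceType) (E : V -> V -> Prop) (eps : V -> bool) :
  graph_sym E -> bigraph_hom E eps ->
  homotopy_equivalent
    (realization (clique_set (expK2_vertices eps) (expK2_edges E))
                 (@fsubset_rel (V * V)%type))
    (realization (box_set E eps) (@box_le V)).
Proof.
move=> Es _; exact: (main_equiv eps Es).
Qed.
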